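(* Let $X$ be a compact metric space and $T:X\to X$ a surjective local homeomorphism such that $Sp_l(X,T)$ is a finite set consisting of isolated points of $X$. Then \[{\rm dim}_{\rm am}(X,T)\le{\rm dim}_{\rm tow}(X,T).\]
   Context: $Sp_l(X,T)=\{x:|T^{-1}(\{x\})|\ge2\}$. For $n\in\mathbb{Z}$ and $x\in X$, $T^n(\{x\})$ is the image under $T^n$ if $n\ge0$ and the preimage under $T^{|n|}$ if $n<0$. $P_d(\mathbb{Z})$ is the set of probability measures on $\mathbb{Z}$ supported on at most $d+1$ points, with metric $\rho(\mu,\nu)=\sum_{m}|\mu(m)-\nu(m)|$ and $\mathbb{Z}$-action $\alpha_n(\mu)(m)=\mu(m-n)$. A map $\varphi:X\to P_d(\mathbb{Z})$ is $(E,\varepsilon)$-equivariant ($E\subseteq\mathbb{Z}$ finite, $\varepsilon>0$) if $\rho(\varphi(y),\alpha_n(\varphi(x)))<\varepsilon$ for all $n\in E$, $x\in X$, $y\in T^n(\{x\})$. ${\rm dim}_{\rm am}(X,T)$ is the least $d$ such that for every finite $E$ and $\varepsilon>0$ there is a continuous $(E,\varepsilon)$-equivariant $\varphi:X\to P_d(\mathbb{Z})$. Tower dimension ${\rm dim}_{\rm tow}(X,T)$: least $d$ such that for every finite $E\subseteq\mathbb{Z}$ there are finitely many pairs $(V_i,S_i)$, $V_i$ open, $S_i\subseteq\mathbb{N}$ finite, with $T^{-m}(\overline{V_i})\cap T^{-n}(\overline{V_i})=\varnothing$ for distinct $m,n\in S_i$ ($T^{-j}$ = preimage under $T^j$), the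 family $\{T^{-n}(V_i):n\in S_i\}$ partitionable into at most $d+1$ subfamilies of pairwise disjoint sets and covering $X$, and each $x$ lying in some $T^{-n}(V_i)$ with $n\in S_i$, $E+n\subseteq S_i$. Dimensions are $\infty$ if no such $d$ exists. *)

(* Defs.v *)
From HB Require Import structures.
From mathcomp Require Import all_boot all_order all_algebra.
From mathcomp Require Import all_classical all_reals all_analysis.
Set Implicit Arguments. Unset Strict Implicit. Unset Printing Implicit Defensive.
Import Order.TTheory GRing.Theory Num.Theory.
Import numFieldNormedType.Exports.
Local Open Scope classical_set_scope.
Local Open Scope ring_scope.

(* T^n({x}) for n : int : image under T^n if n >= 0, preimage under T^|n| if n < 0 *)
Definition Tn_orbit (X : Type) (T : X -> X) (n : int) (x : X) : set X :=
  match n with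
  | Posz k => [set y | y = iter k T x]
  | Negz k => [set y | iter k.+1 T y = x]
  end.

(* mu : int -> R is (the mass function of) an element of P_d(Z): a probability
   measure on Z supported on at most d+1 points. *)
Definition in_Pd (R : realType) (d : nat) (mu : int -> R) : Prop :=
  exists s : seq int, [/\ uniq s, (size s <= d.+1)%N,
    (forall m, m \notin s -> mu m = 0),
    (forall m, 0 <= mu m) & \sum_(m <- s) mu m = 1].

(* rho(mu,nu) = sum_m |mu m - nu m| for finitely supported mu, nu:
   the sum computed over any duplicate-free list containing both supports. *)
Definition rho_lt (R : realType) (mu nu : int -> R) (eps : R) : Prop :=
  exists s : seq int, [/\ uniq s,
    (forall m, m \notin s -> mu m = 0 /\ nu m = 0) &
    \sum_(m <- s) `|mu m - nu m| < eps].

Definition alpha (R : realType) (n : int) (mu : int -> R) : int -> R :=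
  fun m => mu (m - n).

Definition rho_continuous (R : realType) (X : topologicalType)
  (phi : X -> int -> R) : Prop :=
  forall (x : X) (eps : R), 0 < eps -> \forall y \near x, rho_lt (phi y) (phi x) eps.

Definition equivariant (R : realType) (X : Type) (T : X -> X)
  (E : seq int) (eps : R) (phi : X -> int -> R) : Prop :=
  forall n, n \in E -> forall x y, Tn_orbit T n x y ->
    rho_lt (phi y) (alpha n (phi x)) eps.

Definition am_prop (R : realType) (X : topologicalType) (T : X -> X) (d : nat) : Prop :=
  forall (E : seq int) (eps : R), 0 < eps ->
    exists phi : X -> int -> R, [/\ forall x, in_Pd d (phi x),
      rho_continuous phi & equivariant T E eps phi].

Definition tow_prop (X : topologicalType) (T : X -> X) (d : nat) : Prop :=
  forall E : seq int,
    exists (k : nat) (V : 'I_k -> set X) (S : 'I_k -> seq nat),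
      [/\ (forall i, open (V i)),
        (forall i m n, m \in S i -> n \in S i -> m != n ->
           (iter m T @^-1` closure (V i)) `&` (iter n T @^-1` closure (V i)) = set0),
        (exists c : 'I_k -> nat -> 'I_d.+1,
           forall i j m n, m \in S i -> n \in S j -> (i, m) != (j, n) ->
             c i m = c j n ->
             (iter m T @^-1` V i) `&` (iter n T @^-1` V j) = set0),
        (forall x : X, exists i n, n \in S i /\ (iter n T @^-1` V i) x) &
        (forall x : X, exists i n, [/\ n \in S i, (iter n T @^-1` V i) x &
           forall e, e \in E -> exists2 m : nat, m \in S i & m%:Z = e + n%:Z])].

(* least d with the property, +oo if none (infimum in the extended reals) *)
Definition dim_am (R : realType) (X : topologicalType) (T : X -> X) : \bar R :=
  ereal_inf [set (d%:R)%:E | d in [set d : nat | am_prop R T d]].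

Definition dim_tow (R : realType) (X : topologicalType) (T : X -> X) : \bar R :=
  ereal_inf [set (d%:R)%:E | d in [set d : nat | tow_prop T d]].

(* local homeomorphism: continuous, and every point has an open neighbourhood U
   on which T is injective and maps open subsets of U to open sets
   (i.e. T|_U is a homeomorphism onto the open set T(U)). *)
Definition local_homeo (X : topologicalType) (T : X -> X) : Prop :=
  continuous T /\
  forall x : X, exists U : set X, [/\ open U, U x, {in U &, injective T} &
    forall W, open W -> W `<=` U -> open (T @` W)].

Definition Sp_l (X : Type) (T : X -> X) : set X :=
  [set x | exists y1 y2, [/\ y1 <> y2, T y1 = x & T y2 = x]].

(* Main.v *)
Require Import Defs.
From HB Require Import structures.
From mathcomp Require Import all_boot all_order all_algebra.
From mathcomp Require Import all_classical all_reals all_analysis.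
From mathcomp Require Import zify ring lra.
Import Order.TTheory GRing.Theory Num.Theory.
Import numFieldNormedType.Exports.
Local Open Scope classical_set_scope.
Local Open Scope ring_scope.
Set Implicit Arguments. Unset Strict Implicit. Unset Printing Implicit Defensive.
Section Acomb.
Local Open Scope nat_scope.
Variables (S : seq nat) (L : nat).

Definition prA (j t : nat) : bool :=
  [forall s : 'I_t.+1, (j + s \in S) && (s <= j) && (j - s \in S)].

Definition aa (j : nat) : nat := \sum_(t < L) prA j t.

Lemma aa_le j : aa j <= L.
Proof.
rewrite /aa; apply: leq_trans (_ : \sum_(t < L) 1 <= _).
  by apply: leq_sum => t _; case: (prA j t).
by rewrite sum1_card card_ord.
Qed.

Lemma aa_notin j : j \notin S -> aa j = 0.
Proof.
move=> jS; rewrite /aa big1 // => t _.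
case P: (prA j t) => //; move/forallP: P => /(_ ord0) /=.
by rewrite addn0 (negbTE jS).
Qed.

Lemma sum_shift_le (f g : nat -> bool) n :
  (forall t, f t.+1 -> g t) -> \sum_(t < n) f t <= \sum_(t < n) g t + 1.
Proof.
move=> fg; case: n => [|n]; first by rewrite !big_ord0.
rewrite big_ord_recl big_ord_recr /= addnC leq_add //; last by case: (f 0).
apply: leq_trans (leq_addr _ _); apply: leq_sum => t _.
by case E: (f _) => //; rewrite /= (fg _ E).
Qed.

Lemma prAP j t : reflect (forall s, s <= t -> [/\ j + s \in S, s <= j & j - s \in S]) (prA j t).
Proof.
apply: (iffP forallP) => H.
  move=> s st; have := H (Ordinal (st : s < t.+1)); by case/andP => /andP[-> ->] ->.
by move=> [s /= st]; have [-> -> ->] := H s st.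
Qed.

Lemma prA_up j t : prA j t.+1 -> prA j.+1 t.
Proof.
move/prAP => H; apply/prAP => s st.
have [h1 h2 h3] := H s.+1 st.
split; first by rewrite addSnnS.
  lia.
case: s st h1 h2 h3 => [|s] st h1 h2 h3.
  by have [+ _ _] := H 1 isT; rewrite subn0 addn1.
have [_ _ +] := H s (leq_trans (leqnSn _) (leq_trans st (leqnSn _))); by rewrite subSS.
Qed.

Lemma prA_down j t : prA j.+1 t.+1 -> prA j t.
Proof.
move/prAP => H; apply/prAP => s st.
have [h1 h2 h3] := H s.+1 st.
split; last by rewrite subSS in h3.
  case: s st h1 h2 h3 => [|s] st h1 h2 h3.
    by have [_ _ +] := H 1 isT; rewrite subSS subn0 addn0.
  by have [+ _ _] := H s (leq_trans (leqnSn _) (leq_trans st (leqnSn _))); rewrite addSnnS.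
by [].
Qed.

Lemma aa_lip1 j : aa j <= aa j.+1 + 1 /\ aa j.+1 <= aa j + 1.
Proof.
split; apply: sum_shift_le => t; [exact: prA_up|exact: prA_down].
Qed.

Lemma aa_lip j k : aa j <= aa (j + k) + k /\ aa (j + k) <= aa j + k.
Proof.
elim: k => [|k [IH1 IH2]]; first by rewrite !addn0.
have [h1 h2] := aa_lip1 (j + k); rewrite [j + k.+1]addnS; split; lia.
Qed.

Lemma aa0 : aa 0 <= 1.
Proof.
rewrite /aa; case: L => [|n]; first by rewrite big_ord0.
rewrite big_ord_recl big1 ?addn0; first by case: (prA 0 0).
move=> t _; case P: (prA _ _) => //; move/prAP: P => /(_ 1 isT) [_ +].
by [].
Qed.

Lemma aa_small j : aa j <= j.+1.
Proof. have [_ h] := aa_lip 0 j; have := aa0; rewrite add0n in h; lia. Qed.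

Lemma aa_good j : (forall s, s <= L -> [/\ j + s \in S, s <= j & j - s \in S]) -> aa j = L.
Proof.
move=> H; rewrite /aa (eq_bigr (fun _ => 1)); first by rewrite sum1_card card_ord.
move=> t _; suff -> : prA j t by [].
apply/prAP => s st; apply: H; apply: leq_trans st _; exact: ltnW.
Qed.
End Acomb.
Section Constr.
Variables (R : realType) (X : topologicalType) (T : X -> X) (k : nat)
  (V : 'I_k -> set X) (S : 'I_k -> seq nat) (d L J : nat)
  (c : 'I_k -> nat -> 'I_d.+1) (g : 'I_k -> X -> R).
Hypothesis Hcol : forall i j m n, m \in S i -> n \in S j -> (i, m) != (j, n) ->
  c i m = c j n -> (iter m T @^-1` V i) `&` (iter n T @^-1` V j) = set0.
Hypothesis HJ : forall i m, m \in S i -> (m < J)%N.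
Hypothesis Hg0 : forall i y, 0 <= g i y.
Hypothesis Hg1 : forall i y, g i y <= 1.
Hypothesis HgV : forall i y, 0 < g i y -> V i y.

Definition a i j := aa (S i) L j.
Definition Fv i (m : int) z : R :=
  if m <= 0 then (a i (absz m))%:R * g i (iter (absz m) T z) else 0.
Definition Gv i (m : int) z : R :=
  if (m <= 0) && (absz m \in S i) then g i (iter (absz m) T z) else 0.
Definition act z i (m : int) : bool :=
  (m <= 0) && (absz m \in S i) && (0 < g i (iter (absz m) T z)).
Definition u z m := \sum_(i < k) Fv i m z.
Definition Lam0 : seq int := [seq - (j%:Z) | j <- index_iota 0 J].
Definition W z := \sum_(m <- Lam0) u z m.
Definition phi z m := u z m / W z.

Lemma Lam0_uniq : uniq Lam0.
Proof.
rewrite map_inj_uniq ?iota_uniq //; move=> x y /eqP; rewrite eqr_opp => /eqP.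
by case.
Qed.

Lemma inLam0 m : m <= 0 -> (absz m < J)%N -> m \in Lam0.
Proof.
move=> m0 mJ; apply/mapP; exists (absz m).
  by rewrite mem_index_iota.
by rewrite -[m]opprK abszN gez0_abs // oppr_ge0.
Qed.

Lemma sum_filter_supp (f : int -> R) s s0 : uniq s -> uniq s0 ->
  (forall m, m \notin s0 -> f m = 0) -> {subset s0 <= s} ->
  \sum_(m <- s) f m = \sum_(m <- s0) f m.
Proof.
move=> us us0 f0 sub.
rewrite (bigID (fun m => m \in s0)) /= [X in _ + X]big1 ?addr0; last first.
  by move=> m /f0.
rewrite -big_filter; apply: perm_big; apply: uniq_perm.
- exact: filter_uniq.
- exact: us0.
by move=> m; rewrite mem_filter; case: (boolP (m \in s0)) => // /sub ->.
Qed.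

Lemma sum_supp_le (f : int -> R) s s0 : uniq s -> uniq s0 ->
  (forall m, 0 <= f m) -> (forall m, m \notin s0 -> f m = 0) ->
  \sum_(m <- s) f m <= \sum_(m <- s0) f m.
Proof.
move=> us us0 fge f0.
rewrite (bigID (fun m => m \in s0)) /= [X in _ + X]big1 ?addr0; last first.
  by move=> m /f0.
rewrite -big_filter.
rewrite [X in _ <= X](bigID (fun m => m \in [seq m <- s | m \in s0])) /=.
rewrite -[X in X <= _]addr0 lerD ?sumr_ge0 //.
rewrite -[X in _ <= X]big_filter le_eqVlt; apply/orP; left; apply/eqP.
apply: perm_big; apply: uniq_perm; rewrite ?filter_uniq //.
by move=> m; rewrite !mem_filter; case: (boolP (m \in s)); case: (boolP (m \in s0)).
Qed.

Lemma act_V z i m : act z i m -> V i (iter (absz m) T z).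
Proof. by case/andP => _ /HgV. Qed.

Lemma act_Lam0 z i m : act z i m -> m \in Lam0.
Proof. by case/andP => /andP[m0 mS] _; apply: inLam0 => //; exact: HJ mS. Qed.

Lemma act_card z : (#|[pred p : 'I_J * 'I_k | act z p.2 (- (p.1 : nat)%:Z)]| <= d.+1)%N.
Proof.
set A := [pred _ | _].
rewrite -(card_in_imset (f := fun p : 'I_J * 'I_k => c p.2 p.1)).
  by apply: leq_trans (max_card _) _; rewrite card_ord.
move=> [j1 i1] [j2 i2]; rewrite !inE /= => a1 a2 ceq.
have v1 := act_V a1; have v2 := act_V a2.
rewrite abszN absz_nat in v1; rewrite abszN absz_nat in v2.
move: a1 a2 => /andP[/andP[_ s1] _] /andP[/andP[_ s2] _].
rewrite abszN absz_nat in s1; rewrite abszN absz_nat in s2.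
case: (eqVneq (i1, (j1 : nat)) (i2, (j2 : nat))) => [[-> /val_inj ->] //|ne].
have := Hcol s1 s2 ne ceq; move/seteqP => [/(_ z) H _].
by exfalso; apply: H.
Qed.

Lemma act_sum_le z s : uniq s ->
  \sum_(m <- s) \sum_(i < k) ((act z i m)%:R : R) <= (d.+1)%:R.
Proof.
move=> us.
apply: (le_trans (@sum_supp_le (fun m => \sum_(i < k) ((act z i m)%:R : R)) _ _ us Lam0_uniq _ _)).
- by move=> m; apply: sumr_ge0 => i _; rewrite ler0n.
- move=> m mL; apply: big1 => i _; case A: (act z i m) => //.
  by rewrite (act_Lam0 A) in mL.
rewrite /Lam0 big_map big_mkord pair_big /=.
rewrite -natr_sum ler_nat.
apply: leq_trans (act_card z).
rewrite (eq_bigr (fun p : 'I_J * 'I_k => if act z p.2 (- (p.1 : nat)%:Z) then 1%N else 0%N)).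
  by rewrite -big_mkcond sum1_card.
by move=> p _; case: (act _ _ _).
Qed.

Lemma Gv_le_act z i m : Gv i m z <= (act z i m)%:R.
Proof.
rewrite /Gv /act; case: ((m <= 0) && (absz m \in S i)) => /=; last by rewrite ler0n.
have := Hg0 i (iter (absz m) T z); rewrite le_eqVlt => /orP[/eqP <-|->].
  by rewrite ler0n.
exact: Hg1.
Qed.

Lemma Gamma_le z s : uniq s -> \sum_(m <- s) \sum_(i < k) Gv i m z <= (d.+1)%:R.
Proof.
move=> us; apply: le_trans (act_sum_le z us).
by apply: ler_sum => m _; apply: ler_sum => i _; exact: Gv_le_act.
Qed.
Lemma Fv_neg i (j : nat) z : Fv i (- j%:Z) z = (a i j)%:R * g i (iter j T z).
Proof. by rewrite /Fv oppr_le0 abszN absz_nat. Qed.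

Lemma Fv_pos i (n : nat) z : Fv i (n.+1)%:Z z = 0.
Proof. by rewrite /Fv lez0_nat. Qed.

Lemma Gv_neg i (j : nat) z : Gv i (- j%:Z) z = if j \in S i then g i (iter j T z) else 0.
Proof. by rewrite /Gv oppr_le0 abszN absz_nat. Qed.

Lemma Gv_pos i (n : nat) z : Gv i (n.+1)%:Z z = 0.
Proof. by rewrite /Gv lez0_nat. Qed.

Lemma a_notin i j : j \notin S i -> a i j = 0%N.
Proof. exact: aa_notin. Qed.

Lemma int_cases (m : int) : (exists j : nat, m = - j%:Z) \/ (exists n : nat, m = (n.+1)%:Z).
Proof.
case: m => [[|n]|n]; first by left; exists 0%N.
  by right; exists n.
by left; exists n.+1; rewrite NegzE.
Qed.

Lemma F_diff i m x k0 :
  `|Fv i m (iter k0 T x) - Fv i (m - k0%:Z) x| <=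
    k0%:R * (Gv i m (iter k0 T x) + Gv i (m - k0%:Z) x).
Proof.
have [[j ->]|[n ->]] := int_cases m.
  have -> : - j%:Z - k0%:Z = - (j + k0)%N%:Z by lia.
  rewrite !Fv_neg !Gv_neg iterD.
  set gg := g i (iter j T (iter k0 T x)).
  have g0 : 0 <= gg := Hg0 _ _.
  have [l1 l2] := aa_lip (S i) L j k0.
  have h1 : (a i j)%:R <= (a i (j + k0))%:R + k0%:R :> R by rewrite -natrD ler_nat.
  have h2 : (a i (j + k0))%:R <= (a i j)%:R + k0%:R :> R by rewrite -natrD ler_nat.
  rewrite -mulrBl normrM (ger0_norm g0).
  have hD : `|(a i j)%:R - (a i (j + k0))%:R| <= k0%:R :> R.
    by rewrite ler_norml; apply/andP; split; lra.
  have k0p : 0 <= k0%:R :> R by [].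
  set D := `|_ - _| in hD *.
  case: (boolP (j \in S i)) => jS; case: (boolP (j + k0 \in S i)) => jkS.
  - nra.
  - nra.
  - nra.
  - by rewrite /D !a_notin // subrr normr0 mul0r addr0 mulr0.
rewrite Fv_pos Gv_pos sub0r normrN add0r.
case: (leqP k0 n) => kn.
  have -> : (n.+1)%:Z - k0%:Z = ((n - k0).+1)%:Z by lia.
  by rewrite Fv_pos Gv_pos normr0 mulr0.
have -> : (n.+1)%:Z - k0%:Z = - Posz (k0 - n.+1)%N by lia.
rewrite Fv_neg Gv_neg.
set gg := g i _; have g0 : 0 <= gg := Hg0 _ _.
rewrite normrM (ger0_norm g0) ger0_norm //.
case: (boolP ((k0 - n.+1)%N \in S i)) => jS; last by rewrite a_notin // mul0r mulr0.
apply: ler_wpM2r => //; rewrite ler_nat.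
apply: leq_trans (aa_small _ _ _) _; lia.
Qed.

Lemma u_diff_le x k0 s : uniq s ->
  \sum_(m <- s) `|u (iter k0 T x) m - u x (m - k0%:Z)| <= (2 * k0 * d.+1)%:R.
Proof.
move=> us.
apply: le_trans (_ : \sum_(m <- s) \sum_(i < k) (k0%:R * (Gv i m (iter k0 T x) + Gv i (m - k0%:Z) x)) <= _).
  apply: ler_sum => m _; rewrite /u -sumrB; apply: le_trans (ler_norm_sum _ _ _) _.
  by apply: ler_sum => i _; exact: F_diff.
under eq_bigr do rewrite -mulr_sumr big_split /=.
rewrite -mulr_sumr big_split /=.
have us' : uniq [seq m - k0%:Z | m <- s].
  by rewrite map_inj_uniq // => p q /addIr.
have := Gamma_le (iter k0 T x) us; have := Gamma_le x us'; rewrite big_map => h1 h2.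
rewrite -mulnA !natrM.
have k0p : 0 <= k0%:R :> R by [].
set A := \sum_(_ <- s) _ in h2 *; set B := \sum_(_ <- s) _ in h1 *.
nra.
Qed.
Hypothesis HL : (0 < L)%N.
Hypothesis Hgood : forall z, exists i n, a i n = L /\ g i (iter n T z) = 1.

Lemma Fv_ge0 i m z : 0 <= Fv i m z.
Proof. by rewrite /Fv; case: ifP => // _; rewrite mulr_ge0 ?ler0n. Qed.

Lemma u_ge0 z m : 0 <= u z m.
Proof. by apply: sumr_ge0 => i _; exact: Fv_ge0. Qed.

Lemma Fv_act i m z : Fv i m z != 0 -> act z i m.
Proof.
rewrite /Fv /act; case: ifP => m0; last by rewrite eqxx.
rewrite mulf_eq0 negb_or => /andP[an gn] /=; apply/andP; split.
  by apply: contraNT an => /a_notin ->.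
by rewrite lt_neqAle eq_sym gn Hg0.
Qed.

Lemma u_supp z m : m \notin Lam0 -> u z m = 0.
Proof.
move=> mL; apply: big1 => i _; apply/eqP; apply: contraNT mL => /Fv_act.
exact: act_Lam0.
Qed.

Lemma W_ge z : L%:R <= W z.
Proof.
have [i [n [ha hg]]] := Hgood z.
have nS : n \in S i.
  by apply: contraLR HL => /a_notin an; rewrite -ha an.
have nL : - n%:Z \in Lam0.
  by apply: inLam0; [rewrite oppr_le0 | rewrite abszN absz_nat; exact: HJ nS].
rewrite /W (bigD1_seq _ nL Lam0_uniq) /=.
apply: (@le_trans _ _ (u z (- n%:Z))); last first.
  by rewrite lerDl; apply: sumr_ge0 => m _; exact: u_ge0.
rewrite /u (bigD1 i) //= Fv_neg ha hg mulr1.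
by rewrite lerDl; apply: sumr_ge0 => j _; exact: Fv_ge0.
Qed.

Lemma W_gt0 z : 0 < W z.
Proof. by apply: lt_le_trans (W_ge z); rewrite ltr0n. Qed.

Lemma W_any z s : uniq s -> {subset Lam0 <= s} -> \sum_(m <- s) u z m = W z.
Proof. by move=> us sub; apply: (sum_filter_supp us Lam0_uniq _ sub) => m; exact: u_supp. Qed.

Lemma phi_ge0 z m : 0 <= phi z m.
Proof. by rewrite /phi divr_ge0 ?u_ge0 // ltW // W_gt0. Qed.

Lemma phi_supp z m : m \notin Lam0 -> phi z m = 0.
Proof. by move=> /(u_supp z) h; rewrite /phi h mul0r. Qed.

Lemma in_Pd_phi z : in_Pd d (phi z).
Proof.
exists [seq m <- Lam0 | u z m != 0]; split.
- exact/filter_uniq/Lam0_uniq.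
- rewrite -(ler_nat R) -sum1_size natr_sum.
  apply: le_trans (act_sum_le z (filter_uniq _ Lam0_uniq)).
  rewrite big_seq [X in _ <= X]big_seq; apply: ler_sum => m.
  rewrite mem_filter => /andP[un _].
  have [i _ Fi] : exists2 i, true & Fv i m z != 0.
    apply/exists_inP; apply: contraNT un; rewrite negb_exists_in => /forall_inP H.
    by apply/eqP; apply: big1 => i _; apply/eqP; move/negbTE: (H i isT) => /negbFE.
  rewrite (bigD1 i) //= (Fv_act Fi) -[X in X <= _]addr0 lerD //.
  by apply: sumr_ge0 => j _; rewrite ler0n.
- move=> m; rewrite mem_filter negb_and negbK => /orP[/eqP u0|/phi_supp //].
  by rewrite /phi u0 mul0r.
- exact: phi_ge0.
rewrite big_filter big_mkcond /=.
rewrite (eq_bigr (fun m => phi z m)); last first.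
  by move=> m _; case: ifP => // /negbFE/eqP u0; rewrite /phi u0 mul0r.
by rewrite /phi -mulr_suml divff // gt_eqF // W_gt0.
Qed.
Definition Lam1 k0 : seq int := [seq j%:Z - J%:Z | j <- index_iota 0 (J + k0).+1].

Lemma Lam1_uniq k0 : uniq (Lam1 k0).
Proof. by rewrite map_inj_uniq ?iota_uniq // => p q /addIr []. Qed.

Lemma mem_Lam1 k0 m : - J%:Z <= m -> m <= k0%:Z -> m \in Lam1 k0.
Proof.
move=> h1 h2; apply/mapP; exists (absz (m + J%:Z)).
  rewrite mem_index_iota /=.
  have ht : (absz (m + J%:Z))%:Z = m + J%:Z by rewrite gez0_abs //; lia.
  lia.
by rewrite gez0_abs; [lia|lia].
Qed.

Lemma Lam0_bounds m : m \in Lam0 -> - J%:Z <= m /\ m <= 0.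
Proof. by case/mapP => j; rewrite mem_index_iota => /andP[_ jJ] ->; lia. Qed.

Lemma shift_est z k0 : exists s, [/\ uniq s,
  (forall m, m \notin s -> phi (iter k0 T z) m = 0 /\ phi z (m - k0%:Z) = 0) &
  \sum_(m <- s) `|phi (iter k0 T z) m - phi z (m - k0%:Z)| <=
     (4 * k0 * d.+1)%:R / L%:R].
Proof.
have sub1 : {subset Lam0 <= Lam1 k0}.
  by move=> m /Lam0_bounds [h1 h2]; apply: mem_Lam1 => //; lia.
have sub2 m : m - k0%:Z \in Lam0 -> m \in Lam1 k0.
  by move=> /Lam0_bounds [h1 h2]; apply: mem_Lam1; lia.
exists (Lam1 k0); split; first exact: Lam1_uniq.
  move=> m ms; split; apply: phi_supp.
    by apply: contra ms; exact: sub1.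
  by apply: contra ms; exact: sub2.
set z1 := iter k0 T z.
have us := Lam1_uniq k0.
have us' : uniq [seq m - k0%:Z | m <- Lam1 k0].
  by rewrite map_inj_uniq // => p q /addIr.
have hW1 : \sum_(m <- Lam1 k0) u z1 m = W z1 by exact: W_any.
have hW2 : \sum_(m <- Lam1 k0) u z (m - k0%:Z) = W z.
  rewrite -(big_map (fun m => m - k0%:Z) xpredT (u z)); apply: W_any => //.
  move=> m mL; apply/mapP; exists (m + k0%:Z); last by rewrite addrK.
  by apply: sub2; rewrite addrK.
have hD := u_diff_le z k0 us; rewrite -/z1 in hD.
set D := \sum_(_ <- _) _ in hD.
have hWd : `|W z1 - W z| <= D.
  by rewrite -hW1 -hW2 -sumrB; exact: ler_norm_sum.
have W1p := W_gt0 z1; have W2p := W_gt0 z; have W1L := W_ge z1.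
have pt m : `|phi z1 m - phi z (m - k0%:Z)| <=
    `|u z1 m - u z (m - k0%:Z)| / W z1 + u z (m - k0%:Z) * (`|W z1 - W z| / (W z1 * W z)).
  rewrite /phi.
  have -> : u z1 m / W z1 - u z (m - k0%:Z) / W z =
     (u z1 m - u z (m - k0%:Z)) / W z1 + u z (m - k0%:Z) * ((W z - W z1) / (W z1 * W z)).
    by field; apply/andP; split; rewrite gt_eqF.
  apply: le_trans (ler_normD _ _) _; apply: lerD.
    by rewrite normrM (@ger0_norm _ (W z1)^-1) // invr_ge0 ltW.
  rewrite normrM (@ger0_norm _ (u z _)) ?u_ge0 // ler_wpM2l ?u_ge0 //.
  rewrite normrM distrC (@ger0_norm _ (_ ^-1)) // invr_ge0 ltW //.
  exact: mulr_gt0.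
apply: le_trans (ler_sum _ (fun m _ => pt m)) _.
rewrite big_split /= -mulr_suml -mulr_suml hW2 -/D.
have -> : W z * (`|W z1 - W z| / (W z1 * W z)) = `|W z1 - W z| / W z1.
  by field; apply/andP; split; rewrite gt_eqF.
apply: (@le_trans _ _ ((2 * (2 * k0 * d.+1)%:R) / W z1)).
  rewrite -mulrDl; apply: ler_wpM2r; first by rewrite invr_ge0 ltW.
  lra.
have Lp : 0 < L%:R :> R by rewrite ltr0n.
have e : (4 * k0 * d.+1)%:R = 2 * (2 * k0 * d.+1)%:R :> R.
  have -> : (4 * k0 * d.+1 = 2 * (2 * k0 * d.+1))%N by lia.
  by rewrite natrM.
rewrite e; apply: ler_wpM2l; first by rewrite mulr_ge0 // ler0n.
by rewrite lef_pV2 // posrE.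
Qed.
Hypothesis Hgc : forall i, continuous (g i).
Hypothesis HT : continuous T.

Lemma iter_cont n : continuous (iter n T).
Proof.
elim: n => [|n IH]; first by move=> x; exact: cvg_id.
have -> : iter n.+1 T = T \o iter n T by apply: funext.
move=> x; apply: continuous_comp; [exact: IH | exact: HT].
Qed.

Lemma Fv_cont i m : continuous (Fv i m).
Proof.
move=> x; rewrite /Fv; case: (m <= 0); last exact: cvg_cst.
apply: cvgM; first exact: cvg_cst.
exact (continuous_comp (@iter_cont (absz m) x) (@Hgc i (iter (absz m) T x))).
Qed.

Lemma u_cont m : continuous (fun z => u z m).
Proof.
rewrite /u; apply: continuous_big; first exact: add_continuous.
by move=> i _; exact: Fv_cont.
Qed.

Lemma W_cont : continuous W.
Proof.
rewrite /W; apply: continuous_big; first exact: add_continuous.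
by move=> m _; exact: u_cont.
Qed.

Lemma phi_cont m : continuous (fun z => phi z m).
Proof.
move=> x; rewrite /phi; apply: cvgM; first exact: u_cont.
by apply: cvgV; [rewrite gt_eqF // W_gt0 | exact: W_cont].
Qed.

Lemma rho_cont : rho_continuous phi.
Proof.
move=> x eps eps0.
pose f : X -> R := fun y => \sum_(m <- Lam0) `|phi y m - phi x m|.
have fc : f y @[y --> x] --> f x.
  apply: cvg_big; first exact: add_continuous.
  move=> m _; apply: cvg_norm; apply: cvgB; first exact: phi_cont.
  exact: cvg_cst.
have fx0 : f x = 0 by rewrite /f big1 // => m _; rewrite subrr normr0.
rewrite fx0 in fc.
have H := cvgr_lt 0 fc eps eps0.
near=> y.
have hy : f y < eps by near: y; exact: H.
exists Lam0; split => //; first exact: Lam0_uniq.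
by move=> m /[dup] /(phi_supp y) -> /(phi_supp x) ->.
Unshelve. all: by end_near.
Qed.
End Constr.
Section GConstr.
Variables (R : realType) (X : metricType R).

Lemma dist_fun (U : set X) : open U -> exists h : X -> R,
  [/\ continuous h, forall y, 0 <= h y, forall y, ~ U y -> h y = 0 &
      forall y, U y -> 0 < h y].
Proof.
move=> Uo.
case: (pselect (exists c, ~ U c)) => [[c0 nc0]|allU]; last first.
  exists (fun=> 1); split => //.
  - by move=> y; exact: cvg_cst.
  - by move=> y nUy; exfalso; apply: allU; exists y.
pose e y := edist_inf (~` U) y.
have fin y : e y \is a fin_num.
  rewrite ge0_fin_numE ?edist_inf_ge0 //.
  apply: (@le_lt_trans _ _ (edist (y, c0))).
    by apply: ereal_inf_lbound; exists c0.
  apply: (@le_lt_trans _ _ (mdist y c0 + 1)%:E); last exact: ltry.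
  apply: edist_fin; first by rewrite ltr_wpDl ?mdist_ge0.
  by rewrite /= ballEmdist /= ltrDl.
exists (fun y => fine (e y)); split.
- move=> y; have := @edist_inf_continuous R X (~` U) y.
  rewrite /continuous_at -[edist_inf _ y]fineK ?fin // => /fine_cvgP [_].
  exact.
- by move=> y; apply: fine_ge0; exact: edist_inf_ge0.
- by move=> y nUy; rewrite /e edist_inf0.
move=> y Uy.
have : nbhs y U by move: Uo; rewrite openE => /(_ y Uy).
move=> /nbhs_ballP [r r0 sub].
have : (r%:E <= e y)%E.
  apply: le_ereal_inf_tmp => _ [c nUc <-].
  rewrite leNgt; apply/negP => /edist_lt_ball /= bc.
  by apply: nUc; exact: sub.
rewrite -[e y]fineK ?fin // lee_fin => /(lt_le_trans r0).
by [].
Qed.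

Lemma exists_g (T : X -> X) (HT : continuous T) (Xc : compact [set: X])
  (k N : nat) (V : 'I_k -> set X) (Vo : forall i, open (V i))
  (Good : 'I_k -> 'I_N -> bool)
  (cov : forall z, exists i n, Good i n /\ V i (iter n T z)) :
  exists g : 'I_k -> X -> R, [/\ forall i, continuous (g i),
    forall i y, 0 <= g i y, forall i y, g i y <= 1,
    forall i y, 0 < g i y -> V i y &
    forall z, exists i (n : 'I_N), Good i n /\ g i (iter n T z) = 1].
Proof.
have [h hP] := choice (fun i => dist_fun (Vo i)).
case: (pselect (exists x0 : X, True)) => [[x0 _]|noX]; last first.
  exists (fun _ _ => 0); split.
  - by move=> i y; exact: cvg_cst.
  - by [].
  - by move=> *; exact: ler01.
  - by move=> i y; rewrite ltxx.
  - by move=> z; exfalso; apply: noX; exists z.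
pose Gs z := \big[Num.max/0]_(p : 'I_k * 'I_N | Good p.1 p.2) h p.1 (iter p.2 T z).
have iterc n : continuous (iter n T).
  elim: n => [|n IH]; first by move=> x; exact: cvg_id.
  have -> : iter n.+1 T = T \o iter n T by apply: funext.
  move=> x; apply: continuous_comp; [exact: IH | exact: HT].
have Gc : continuous Gs.
  rewrite /Gs; apply: continuous_big; first exact: max_continuous.
  move=> p _ x; have [hc _ _ _] := hP p.1.
  exact (continuous_comp (iterc p.2 x) (hc (iter p.2 T x))).
have Gpos z : 0 < Gs z.
  have [i [n [gn Vn]]] := cov z.
  have [_ _ _ hpos] := hP i.
  apply: lt_le_trans (hpos _ Vn) _.
  exact: (le_bigmax_cond _ (j := (i, n)) (fun p : 'I_k * 'I_N => h p.1 (iter p.2 T z))).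
have [cmin _ cminP] := @compact_EVT_min X R Gs setT (ex_intro _ x0 I) Xc
  (continuous_subspaceT Gc).
set del := Gs cmin.
have del0 : 0 < del := Gpos cmin.
have delle z : del <= Gs z by apply: cminP; rewrite inE.
exists (fun i y => Num.min 1 (h i y / del)); split.
- move=> i; have [hc _ _ _] := hP i.
  apply: min_fun_continuous; first by move=> x; exact: cvg_cst.
  move=> x; apply: cvgM; [exact: hc | exact: cvg_cst].
- move=> i y; have [_ h0 _ _] := hP i.
  by rewrite le_min ler01 divr_ge0 // ltW.
- by move=> i y; rewrite ge_min lexx.
- move=> i y; have [_ _ hz _] := hP i.
  rewrite lt_min => /andP[_ hd].
  by case: (pselect (V i y)) => // nV; rewrite hz // mul0r ltxx in hd.
move=> z.
have : ~ (forall p : 'I_k * 'I_N, Good p.1 p.2 -> h p.1 (iter p.2 T z) < del).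
  move=> H; have := delle z; rewrite leNgt => /negP; apply.
  exact: bigmax_lt.
move=> /existsNP [[i n]] /= /not_implyP [gd ndel].
exists i, n; split => //.
apply/min_l; rewrite ler_pdivlMr // mul1r.
by rewrite leNgt; apply/negP.
Qed.

End GConstr.
Lemma tow_am (R : realType) (X : metricType R) (T : X -> X)
  (HT : continuous T) (Xc : compact [set: X]) (d : nat) :
  tow_prop T d -> am_prop R T d.
Proof.
move=> tw E eps eps0.
pose K := (\max_(e <- E) `|e|)%N.
have hK e : e \in E -> (`|e| <= K)%N.
  by move=> eE; rewrite /K; apply: leq_bigmax_seq.
pose L := (Num.truncn ((4 * K * d.+1)%:R / eps)).+1.
have HL : (0 < L)%N by [].
have Leps : (4 * K * d.+1)%:R / L%:R < eps :> R.
  have h := truncnS_gt ((4 * K * d.+1)%:R / eps : R).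
  have Lp : 0 < L%:R :> R by rewrite ltr0n.
  rewrite ltr_pdivrMr // mulrC -ltr_pdivrMr //.
pose E' := [seq l%:Z - L%:Z | l <- iota 0 (2 * L).+1].
have [kk [V [S [Vo Hdis [c Hcol] _ Hgood]]]] := tw E'.
pose J := (\max_(i < kk) \max_(m <- S i) m)%N.+1.
have HJ i m : m \in S i -> (m < J)%N.
  move=> mS; rewrite ltnS; apply: leq_trans (leq_bigmax i).
  by apply: leq_bigmax_seq.
have cov : forall z, exists i (n : 'I_J), (aa (S i) L n == L) /\ V i (iter n T z).
  move=> z; have [i [n [nS Vn hE]]] := Hgood z.
  exists i, (Ordinal (HJ _ _ nS)); split => //=.
  apply/eqP; apply: aa_good => s sL.
  have m1 : s%:Z \in E'.
    by apply/mapP; exists (s + L)%N; [rewrite mem_iota; lia | lia].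
  have m2 : - s%:Z \in E'.
    by apply/mapP; exists (L - s)%N; [rewrite mem_iota; lia | lia].
  have [p1 p1S e1] := hE _ m1; have [p2 p2S e2] := hE _ m2.
  split.
  - by have -> : (n + s = p1)%N by lia.
  - lia.
  - by have -> : (n - s = p2)%N by lia.
have [g [gc g0 g1 gV gG]] := exists_g HT Xc Vo cov.
have Hgood' : forall z, exists i n, a S L i n = L /\ g i (iter n T z) = 1.
  by move=> z; have [i [n [/eqP h1 h2]]] := gG z; exists i, n.
exists (phi T S L J g); split.
- exact: (in_Pd_phi Hcol HJ g0 gV HL Hgood').
- exact: (rho_cont HJ g0 HL Hgood' gc HT).
move=> n nE x y.
have bnd k0 : (k0 <= K)%N -> (4 * k0 * d.+1)%:R / L%:R <= (4 * K * d.+1)%:R / L%:R :> R.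
  move=> kK; apply: ler_wpM2r; first by rewrite invr_ge0 ler0n.
  by rewrite ler_nat leq_mul2r leq_mul2l kK orbT.
case: n nE => k0 nE /=.
  move=> ->; have [s [us supp le]] := shift_est Hcol HJ g0 g1 gV HL Hgood' x k0.
  exists s; split => //.
  apply: le_lt_trans le _; apply: le_lt_trans Leps.
  by apply: bnd; have := hK _ nE.
move=> hy.
have [s [us supp le]] := shift_est Hcol HJ g0 g1 gV HL Hgood' y k0.+1.
subst x.
exists [seq m - k0.+1%:Z | m <- s]; split.
- by rewrite map_inj_uniq // => p q /addIr.
- move=> m ms.
  have ms' : m + k0.+1%:Z \notin s.
    by apply: contra ms => h; apply/mapP; exists (m + k0.+1%:Z); rewrite ?addrK.
  have [h1 h2] := supp _ ms'.
  rewrite addrK in h2; split => //.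
rewrite big_map.
apply: le_lt_trans (_ : _ <= (4 * k0.+1 * d.+1)%:R / L%:R) _.
  apply: le_trans le; rewrite le_eqVlt; apply/orP; left; apply/eqP.
  apply: eq_bigr => m _; rewrite distrC /alpha NegzE opprK.
  by rewrite subrK.
apply: le_lt_trans Leps; apply: bnd.
have := hK _ nE; rewrite NegzE abszN; exact.
Qed.

Theorem lemma5p7 (R : realType) (X : metricType R) (T : X -> X) :
  compact [set: X] ->
  (forall y : X, exists x : X, T x = y) ->
  local_homeo T ->
  finite_set (Sp_l T) ->
  (forall x, Sp_l T x -> open [set x]) ->
  (dim_am R T <= dim_tow R T)%E.
Proof.
move=> Xc _ [HT _] _ _.
rewrite /dim_am /dim_tow; apply: ereal_inf_le_tmp.
move=> _ [dd Hd <-]; exists dd => //.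
exact: tow_am.
Qed.
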